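(* Let $\mathbf{Y}|\mathbf{X}=\mathbf{x}\sim\mathcal{N}(\mathbf{x},\sigma^2\mathbf{I}_n)$ with $\sigma>0$, with transition density $f_{\mathbf{Y}|\mathbf{X}}$. Consider the maximum likelihood estimator of $\vec{\mathbf{X}}$ from $\vec{\mathbf{Y}}=\vec{\mathbf{y}}$, $$\hat{\boldsymbol{\ell}}_{\mathrm{MLE}}(\vec{\mathbf{y}})\in\arg\max_{\mathbf{t}\in\vec{\mathbb{R}}_n}\sum_{\pi\in\mathcal{P}}f_{\mathbf{Y}|\mathbf{X}}(\mathbf{P}_\pi\vec{\mathbf{y}}\,|\,\mathbf{t}).$$ Then the MLE is given by $$\hat{\boldsymbol{\ell}}_{\mathrm{MLE}}(\vec{\mathbf{y}})\in\left\{\mathbf{t}\in\vec{\mathbb{R}}_n:\ \sum_{\pi\in\mathcal{P}}\mathbf{P}_\pi\vec{\mathbf{y}}\,e^{\frac{(\mathbf{P}_\pi\vec{\mathbf{y}})^T\mathbf{t}}{\sigma^2}}=\mathbf{t}\sum_{\pi\in\mathcal{P}}e^{\frac{(\mathbf{P}_\pi\vec{\mathbf{y}})^T\mathbf{t}}{\sigma^2}}\right\},$$ and if this set is empty one sets $\hat{\boldsymbol{\ell}}_{\mathrm{MLE}}(\vec{\mathbf{y}})=\vec{\mathbf{y}}$.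
   Context: For $\mathbf{v}\in\mathbb{R}^n$, $\vec{\mathbf{v}}$ is $\mathbf{v}$ sorted in ascending order. $\vec{\mathbb{R}}_n$ is the set of vectors in $\mathbb{R}^n$ whose entries are in ascending order. $\mathcal{P}$ is the set of permutations of $\{1,\dots,n\}$ and $\mathbf{P}_\pi$ the permutation matrix of $\pi$. *)

(* Defs.v *)
From HB Require Import structures.
From mathcomp Require Import all_boot all_order all_algebra all_fingroup.
From mathcomp Require Import all_classical all_reals all_analysis.
Set Implicit Arguments. Unset Strict Implicit. Unset Printing Implicit Defensive.
Import Order.TTheory GRing.Theory Num.Theory.
Local Open Scope ring_scope.

Definition ascending (R : realType) (n : nat) (v : 'cV[R]_n) : Prop :=
  forall i j : 'I_n, (i <= j)%N -> v i 0 <= v j 0.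

Definition gauss_density (R : realType) (n : nat) (sigma : R)
    (y x : 'cV[R]_n) : R :=
  ((Num.sqrt (2 * pi * sigma ^+ 2)) ^+ n)^-1 *
  expR (- (\sum_(i < n) (y i 0 - x i 0) ^+ 2) / (2 * sigma ^+ 2)).

Definition perm_likelihood (R : realType) (n : nat) (sigma : R)
    (y t : 'cV[R]_n) : R :=
  \sum_(s : 'S_n) gauss_density sigma (perm_mx s *m y) t.

Definition is_MLE (R : realType) (n : nat) (sigma : R) (y t : 'cV[R]_n) : Prop :=
  ascending t /\
  forall u : 'cV[R]_n, ascending u -> perm_likelihood sigma y u <= perm_likelihood sigma y t.

Definition ip (R : realType) (n : nat) (a b : 'cV[R]_n) : R := (a^T *m b) 0 0.

Definition MLE_fixed_point_set (R : realType) (n : nat) (sigma : R) (y t : 'cV[R]_n) : Prop :=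
  ascending t /\
  \sum_(s : 'S_n) expR (ip (perm_mx s *m y) t / sigma ^+ 2) *: (perm_mx s *m y)
  = (\sum_(s : 'S_n) expR (ip (perm_mx s *m y) t / sigma ^+ 2)) *: t.

(* Main.v *)
Require Import Defs.
From HB Require Import structures.
From mathcomp Require Import all_boot all_order all_algebra all_fingroup.
From mathcomp Require Import all_classical all_reals all_analysis.
From mathcomp Require Import ring lra.
Import Order.TTheory GRing.Theory Num.Theory.
Local Open Scope ring_scope.

Lemma permmxE (R : realType) n (s : 'S_n) (u : 'cV[R]_n) i j :
  (perm_mx s *m u) i j = u (s i) j.
Proof. by rewrite -row_permE mxE. Qed.

Lemma lik_perm (R : realType) n (sigma : R) (y u : 'cV[R]_n) (s : 'S_n) :
  perm_likelihood sigma y (perm_mx s *m u) = perm_likelihood sigma y u.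
Proof.
rewrite /perm_likelihood (reindex_inj (mulgI s)); apply: eq_bigr => s' _.
rewrite /gauss_density.
suff -> : \sum_(i < n) ((perm_mx (s * s') *m y) i 0 - (perm_mx s *m u) i 0) ^+ 2
  = \sum_(i < n) ((perm_mx s' *m y) i 0 - u i 0) ^+ 2 by [].
rewrite [RHS](reindex_inj (@perm_inj _ s)); apply: eq_bigr => i _.
by rewrite !permmxE permM.
Qed.
Lemma key (R : realType) (I : finType) (E d : I -> R) (c : R) (i0 : I) :
  0 < c -> (forall s, 0 < E s) ->
  (forall h, \sum_s E s * expR ((2 * h * d s - h ^+ 2) * c) <= \sum_s E s) ->
  \sum_s E s * d s = 0.
Proof.
move=> c0 E0 Hh.
have S0 : 0 < \sum_s E s.
  rewrite (bigD1 i0) //=.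
  have : 0 <= \sum_(s | s != i0) E s by apply: sumr_ge0 => s _; exact: ltW.
  have := E0 i0. move: (\sum_(s | s != i0) E s) (E i0) => a b. lra.
have H h : 2 * h * c * (\sum_s E s * d s) - h ^+ 2 * c * (\sum_s E s) <= 0.
  have e : \sum_s E s * ((2 * h * d s - h ^+ 2) * c) = 2 * h * c * (\sum_s E s * d s) - h ^+ 2 * c * (\sum_s E s).
    rewrite !mulr_sumr -sumrB; apply: eq_bigr => s _.
    move: (E s) (d s) => a b; ring.
  have : \sum_s E s * (1 + (2 * h * d s - h ^+ 2) * c) <= \sum_s E s * expR ((2 * h * d s - h ^+ 2) * c).
    apply: ler_sum => s _; apply: ler_wpM2l; [exact: ltW | exact: expR_ge1Dx].
  have -> : \sum_s E s * (1 + (2 * h * d s - h ^+ 2) * c) = \sum_s E s + (2 * h * c * (\sum_s E s * d s) - h ^+ 2 * c * (\sum_s E s)).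
    rewrite -e -big_split; apply: eq_bigr => s _. by rewrite mulrDr mulr1.
  have := Hh h.
  move: (\sum_s E s * expR ((2 * h * d s - h ^+ 2) * c)) (\sum_s E s) (2 * h * c * (\sum_s E s * d s) - h ^+ 2 * c * (\sum_s E s)) => a b x.
  lra.
move: (\sum_s E s * d s) (\sum_s E s) S0 H => G S S0 H.
have := H (G / S).
have -> : 2 * (G / S) * c * G - (G / S) ^+ 2 * c * S = G ^+ 2 * c / S.
  by field; rewrite gt_eqF.
rewrite pmulr_lle0 ?invr_gt0 // pmulr_lle0 //.
by rewrite real_exprn_even_le0 ?num_real // => /eqP.
Qed.

Lemma exists_sort (R : realType) n (u : 'cV[R]_n) :
  exists s : 'S_n, ascending (perm_mx s *m u).
Proof.
pose leT := fun i j : 'I_n => u i 0 <= u j 0.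
pose ss := sort leT (enum 'I_n).
have szs : size ss = n by rewrite size_sort size_enum_ord.
have uq : uniq ss by rewrite sort_uniq enum_uniq.
have srt : sorted leT ss by apply: sort_sorted => a b; exact: le_total.
pose f := fun i : 'I_n => nth i ss i.
have finj : injective f.
  move=> i j; rewrite /f (set_nth_default j) ?szs // => /eqP.
  by rewrite nth_uniq ?szs // => /eqP; exact: val_inj.
exists (perm finj) => i j lij; rewrite !permmxE !permE /f (set_nth_default i j) ?szs //.
apply: (sorted_leq_nth (leT := leT)) => //.
- by move=> b a c; exact: le_trans.
- by move=> a; exact: lexx.
- by rewrite inE szs.
- by rewrite inE szs.
Qed.

Lemma ipE (R : realType) n (a b : 'cV[R]_n) : ip a b = \sum_k a k 0 * b k 0.
Proof. by rewrite /ip mxE; apply: eq_bigr => k _; rewrite mxE. Qed.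

Theorem lemma2 (R : realType) (n : nat) (sigma : R) (y t : 'cV[R]_n) :
  0 < sigma -> ascending y -> is_MLE sigma y t -> MLE_fixed_point_set sigma y t.
Proof.
move=> sig0 _ [tasc tmax]; split=> //.
have Lmax u : perm_likelihood sigma y u <= perm_likelihood sigma y t.
  by have [s su] := @exists_sort R n u; rewrite -(@lik_perm R n sigma y u s); exact: tmax.
have sn0 : sigma != 0 by rewrite gt_eqF.
apply/matrixP => i j; rewrite (ord1 j) {j} summxE mxE.
under eq_bigr do rewrite mxE.
pose Y := \sum_(k < n) y k 0 ^+ 2.
pose T := \sum_(k < n) t k 0 ^+ 2.
have normY s : \sum_(k < n) (perm_mx s *m y) k 0 ^+ 2 = Y.
  under eq_bigr do rewrite permmxE.
  by symmetry; exact: (reindex_inj (F := fun k => y k 0 ^+ 2) (@perm_inj _ s)).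
have Dt s : \sum_(k < n) ((perm_mx s *m y) k 0 - t k 0) ^+ 2
    = Y - 2 * ip (perm_mx s *m y) t + T.
  rewrite (eq_bigr (fun k => ((perm_mx s *m y) k 0 ^+ 2 - 2 * ((perm_mx s *m y) k 0 * t k 0)) + t k 0 ^+ 2)); last by move=> k _; ring.
  by rewrite big_split sumrB /= -mulr_sumr normY ipE.
have Du s h : \sum_(k < n) ((perm_mx s *m y) k 0 - (t + h *: delta_mx i 0) k 0) ^+ 2
    = \sum_(k < n) ((perm_mx s *m y) k 0 - t k 0) ^+ 2 - 2 * h * ((perm_mx s *m y) i 0 - t i 0) + h ^+ 2.
  rewrite (eq_bigr (fun k => ((perm_mx s *m y) k 0 - t k 0) ^+ 2 + (if k == i then h ^+ 2 - 2 * h * ((perm_mx s *m y) k 0 - t k 0) else 0))).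
    rewrite big_split /= -big_mkcond big_pred1_eq.
    move: (\sum_(k < n) ((perm_mx s *m y) k 0 - t k 0) ^+ 2) => z; ring.
  move=> k _; rewrite !mxE; case: (k =P i) => [->|/eqP ne]; rewrite ?eqxx ?(negbTE ne) /=.
    move: ((perm_mx s *m y) i 0) (t i 0) => a b; ring.
  move: ((perm_mx s *m y) k 0) (t k 0) => a b; ring.
pose c0 := ((Num.sqrt (2 * pi * sigma ^+ 2)) ^+ n)^-1.
have c0pos : 0 < c0.
  rewrite invr_gt0 exprn_gt0 // sqrtr_gt0 mulr_gt0 ?exprn_gt0 //.
  by rewrite mulr_gt0 // pi_gt0.
pose E s := expR (- (\sum_(k < n) ((perm_mx s *m y) k 0 - t k 0) ^+ 2) / (2 * sigma ^+ 2)).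
pose K := expR (- (Y + T) / (2 * sigma ^+ 2)).
pose w s := expR (ip (perm_mx s *m y) t / sigma ^+ 2).
have EK s : E s = K * w s.
  rewrite /E Dt /K /w -expRD; congr expR; field; rewrite ?expf_neq0 ?sn0 //.
have Hz : \sum_s E s * ((perm_mx s *m y) i 0 - t i 0) = 0.
  apply: (@key R _ E (fun s => (perm_mx s *m y) i 0 - t i 0) (2 * sigma ^+ 2)^-1 (1%g : 'S_n)).
- by rewrite invr_gt0 mulr_gt0 // exprn_gt0.
- by move=> s; exact: expR_gt0.
- move=> h; have := Lmax (t + h *: delta_mx i 0).
  rewrite /perm_likelihood /gauss_density -/c0 -!mulr_sumr ler_pM2l //.
  move=> H; apply: le_trans H; rewrite le_eqVlt; apply/orP; left; apply/eqP.
  apply: eq_bigr => s _.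
  rewrite Du /E -expRD; congr expR; field; rewrite ?expf_neq0 ?sn0 //.
have Hw : \sum_s w s * ((perm_mx s *m y) i 0 - t i 0) = 0.
    have : K * \sum_s w s * ((perm_mx s *m y) i 0 - t i 0) = 0.
      by rewrite mulr_sumr -[RHS]Hz; apply: eq_bigr => s _; rewrite EK mulrA.
    by move/eqP; rewrite mulf_eq0 gt_eqF ?expR_gt0 //= => /eqP.
  rewrite mulr_suml; apply/eqP; rewrite -subr_eq0 -sumrB; apply/eqP.
  by rewrite -[RHS]Hw; apply: eq_bigr => s _; rewrite /w; ring.
Qed.
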